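(* Let $M\ge 2$ be an integer. For all integers $1\le m\le M-1$ and all $z\in\mathbb{C}$, $$|t_m(z)|\le m^2\,2^{6m}\sup_{0\le\xi\le m}\big(\max\{|z+\xi|,M\}\big)^m.$$
   Context: For an integer $M\ge1$ and $0\le m\le M-1$, let $p_m(x)=x(x-1)\cdots(x-m+1)(x-M)(x-M-1)\cdots(x-M-m+1)$ and define the discrete Chebyshev polynomial $t_m(x)=\frac{1}{m!}\sum_{j=0}^m(-1)^j\binom{m}{j}p_m(x+m-j)$ (i.e. $\frac{1}{m!}$ times the $m$-th forward difference of $p_m$), viewed as a polynomial on $\mathbb{C}$. *)

(* Defs.v *)
From HB Require Import structures.
From mathcomp Require Import all_boot all_order all_algebra.
From mathcomp Require Import reals.
From mathcomp.real_closed Require Import complex.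
Set Implicit Arguments. Unset Strict Implicit. Unset Printing Implicit Defensive.
Import Order.TTheory GRing.Theory Num.Theory.
Local Open Scope ring_scope.

Definition pm (R : realType) (M m : nat) (x : R[i]) : R[i] :=
  \prod_(i < m) ((x - i%:R) * (x - (M + i)%:R)).

Definition tm (R : realType) (M m : nat) (x : R[i]) : R[i] :=
  (m`!%:R)^-1 * \sum_(j < m.+1) ((-1) ^+ j * ('C(m, j))%:R * pm M m (x + (m - j)%:R)).

Definition cabs (R : realType) (z : R[i]) : R := Normc.normc z.

(* Main.v *)
Require Import Defs.
From HB Require Import structures.
From mathcomp Require Import all_boot all_order all_algebra.
From mathcomp Require Import reals.
From mathcomp.real_closed Require Import complex.
From mathcomp Require Import zify ring lra.
Import Order.TTheory GRing.Theory Num.Theory.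
Local Open Scope ring_scope.
Section Dif.
Variable C : comNzRingType.
Definition dif (f : C -> C) := fun x => f (x + 1) - f x.

Lemma iter_difS n f x : iter n.+1 dif f x = iter n dif f (x + 1) - iter n dif f x.
Proof. by []. Qed.

Lemma iter_dif_ext n f g : (forall y, f y = g y) -> forall x, iter n dif f x = iter n dif g x.
Proof. move=> H; elim: n => [|n IH] x /=; first exact: H. by rewrite /dif !IH. Qed.

Lemma pascal_sum n (a : nat -> C) :
  \sum_(j < n.+2) ('C(n.+1, j))%:R * a j =
  \sum_(j < n.+1) ('C(n, j))%:R * a j + \sum_(j < n.+1) ('C(n, j))%:R * a j.+1.
Proof.
have E1 : \sum_(j < n.+1) ('C(n, j))%:R * a j =
   a 0%N + \sum_(j < n) ('C(n, j.+1))%:R * a j.+1.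
  by rewrite big_ord_recl /= bin0 mul1r.
have E2 : \sum_(j < n.+1) ('C(n, j.+1))%:R * a j.+1 =
   \sum_(j < n) ('C(n, j.+1))%:R * a j.+1.
  by rewrite big_ord_recr /= bin_small // mul0r addr0.
rewrite big_ord_recl /= bin0 mul1r.
under eq_bigr => i _ do rewrite /bump /= add1n binS natrD mulrDl.
rewrite big_split /= E1 E2; ring.
Qed.

Lemma dif_explicit n f x : iter n dif f x =
  \sum_(j < n.+1) (-1) ^+ j * ('C(n, j))%:R * f (x + (n - j)%:R).
Proof.
elim: n x => [|n IH] x.
  by rewrite big_ord_recl big_ord0 /= addr0 expr0 mul1r mul1r addr0.
rewrite iter_difS !IH.
have P := pascal_sum n (fun j => (-1) ^+ j * f (x + (n.+1 - j)%:R)).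
rewrite /= in P.
transitivity (\sum_(j < n.+2) 'C(n.+1, j)%:R * ((-1) ^+ j * f (x + (n.+1 - j)%:R))); last first.
  by apply: eq_bigr => j _; rewrite mulrA [_ * _ ^+ _]mulrC.
rewrite P; congr (_ + _).
  apply: eq_bigr => j _; rewrite mulrCA mulrA; congr (_ * f _).
  rewrite -addrA; congr (_ + _); rewrite subSn; last by have := ltn_ord j; lia.
  by rewrite -natr1 addrC.
rewrite -sumrN; apply: eq_bigr => j _.
by rewrite subSS exprS mulN1r mulNr mulrN mulrCA mulrA.
Qed.

Lemma leibniz n f g x : iter n dif (fun y => f y * g y) x =
  \sum_(k < n.+1) ('C(n, k))%:R * (iter k dif f x * iter (n - k) dif g (x + k%:R)).
Proof.
elim: n x => [|n IH] x.
  by rewrite big_ord_recl big_ord0 /= addr0 mul1r addr0.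
rewrite iter_difS !IH -sumrB.
have P := pascal_sum n (fun k => iter k dif f x * iter (n.+1 - k) dif g (x + k%:R)).
rewrite /= in P; rewrite P -big_split; apply: eq_bigr => k _ /=.
rewrite subSS subSn; last by have := ltn_ord k; lia.
rewrite !iter_difS -natr1 !addrA (addrAC x 1) [dif (iter k dif f) x]/dif; ring.
Qed.

Definition ffc (a : C) (n : nat) (x : C) := \prod_(i < n) (x + a - i%:R).

Lemma ffc_dif a n x : ffc a n.+1 (x + 1) - ffc a n.+1 x = n.+1%:R * ffc a n x.
Proof.
rewrite /ffc big_ord_recl big_ord_recr /=.
have -> : \prod_(i < n) (x + 1 + a - (bump 0 i)%:R) = \prod_(i < n) (x + a - i%:R).
  apply: eq_bigr => i _; rewrite /bump /= add1n -natr1; ring.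
rewrite subr0 -natr1; ring.
Qed.

Lemma iter_ffc k a n x : iter k dif (ffc a n) x = (n ^_ k)%:R * ffc a (n - k) x.
Proof.
elim: k x => [|k IH] x.
  by rewrite ffactn0 subn0 mul1r.
rewrite iter_difS !IH -mulrBr ffactnSr subnS natrM.
case: (n - k)%N => [|d] /=.
  by rewrite /ffc !big_ord0 subrr; ring.
by rewrite (ffc_dif a d x) mulrA.
Qed.
End Dif.
Arguments ffc {C}.
Arguments dif {C}.

Lemma bin_le_exp2 n k : ('C(n, k) <= 2 ^ n)%N.
Proof.
elim: n k => [|n IH] [|k] //=.
  by rewrite bin0 expn_gt0.
rewrite binS expnS mul2n -addnn leq_add //.
Qed.

Lemma coef_bound m k : (k <= m)%N ->
  ('C(m, k) * m ^_ k * m ^_ (m - k) <= m`! * 4 ^ m)%N.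
Proof.
move=> km.
have E : ('C(m, k) * m ^_ k * m ^_ (m - k) = 'C(m, k) * 'C(m, k) * m`!)%N.
  rewrite -bin_ffact -(ffact_fact (leq_subr k m)) subKn //.
  ring.
rewrite E mulnC leq_mul2l; apply/orP; right.
have -> : (4 ^ m = 2 ^ m * 2 ^ m)%N by rewrite -expnMn.
by rewrite leq_mul // bin_le_exp2.
Qed.

Section Cx.
Context {R : realType}.
Local Notation C := R[i].

Lemma cabsM (x y : C) : cabs (x * y) = cabs x * cabs y.
Proof. exact: Normc.normcM. Qed.
Lemma cabsD (x y : C) : cabs (x + y) <= cabs x + cabs y.
Proof. exact: le_normcD. Qed.
Lemma cabsN (x : C) : cabs (- x) = cabs x.
Proof. exact: normcN. Qed.
Lemma cabs_nat n : cabs (n%:R : C) = n%:R.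
Proof. by rewrite /cabs normcMn Normc.normc1. Qed.
Lemma cabs_ge0 (x : C) : 0 <= cabs x.
Proof. by case: x => a b; rewrite /cabs /Normc.normc sqrtr_ge0. Qed.
Lemma cabsB (x y : C) : cabs (x - y) <= cabs x + cabs y.
Proof. by rewrite -(cabsN y) cabsD. Qed.
Lemma cabsV (x : C) : cabs (x^-1) = (cabs x)^-1.
Proof. exact: Normc.normcV. Qed.

Lemma cabs_sum n (F : 'I_n -> C) : cabs (\sum_(i < n) F i) <= \sum_(i < n) cabs (F i).
Proof.
elim: n F => [|n IH] F; first by rewrite !big_ord0 /cabs Normc.normc0.
rewrite !big_ord_recr /=; apply: le_trans (cabsD _ _) _.
by rewrite lerD2r IH.
Qed.

Lemma cabs_prod n (F : 'I_n -> C) K : (forall i, cabs (F i) <= K) ->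
  cabs (\prod_(i < n) F i) <= K ^+ n.
Proof.
elim: n F => [|n IH] F H; first by rewrite !big_ord0 /cabs Normc.normc1.
rewrite !big_ord_recr /= cabsM exprSr; apply: ler_pM => //; try exact: cabs_ge0.
exact: IH.
Qed.
End Cx.

Lemma pm_ffc (R : realType) (M m : nat) (x : R[i]) :
  pm M m x = ffc 0 m x * ffc (- M%:R) m x.
Proof.
rewrite /pm /ffc -big_split; apply: eq_bigr => i _ /=.
by rewrite natrD; ring.
Qed.

Theorem lemma3 (R : realType) (M m : nat) :
  (2 <= M)%N -> (1 <= m)%N -> (m <= M - 1)%N ->
  forall (z : R[i]) (B : R),
    (forall xi : R, 0 <= xi <= m%:R ->
       Num.max (cabs (z + (xi%:C)%C)) M%:R ^+ m <= B) ->
    cabs (tm M m z) <= (m ^ 2 * 2 ^ (6 * m))%:R * B.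
Proof.
move=> HM Hm HmM z B HB.
set A := Num.max (cabs z) M%:R.
have HA : A ^+ m <= B.
  have := HB 0; rewrite lexx ler0n /= => /(_ isT).
  by rewrite rmorph0 addr0.
have Az : cabs z <= A by rewrite le_max lexx.
have AM : M%:R <= A by rewrite le_max lexx orbT.
have A0 : 0 <= A by apply: le_trans AM; rewrite ler0n.
have Etm : tm M m z = (m`!%:R)^-1 *
    iter m dif (fun y => ffc 0 m y * ffc (- M%:R) m y) z.
  rewrite /tm dif_explicit; congr (_ * _); apply: eq_bigr => j _.
  by rewrite pm_ffc.
rewrite Etm leibniz cabsM cabsV cabs_nat.
apply: (@le_trans _ _ ((m`!%:R)^-1 * \sum_(k < m.+1) ((m`! * 4 ^ m)%:R * (4 * A) ^+ m) : R)).
  rewrite ler_pM2l ?invr_gt0 ?ltr0n ?fact_gt0 //.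
  apply: le_trans (cabs_sum _ _) _; apply: ler_sum => k _.
  have km : (k <= m)%N by rewrite -ltnS ltn_ord.
  rewrite !iter_ffc subKn //.
  rewrite !cabsM !cabs_nat.
  have F1 : cabs (ffc 0 (m - k) z) <= (4 * A) ^+ (m - k).
    apply: cabs_prod => i.
    apply: le_trans (cabsB _ _) _; rewrite addr0 cabs_nat.
    have : (i <= M)%N by have := ltn_ord i; lia.
    rewrite -(ler_nat R) => iM; lra.
  have F2 : cabs (ffc (- M%:R) k (z + k%:R)) <= (4 * A) ^+ k.
    apply: cabs_prod => i.
    apply: le_trans (cabsB _ _) _; rewrite cabs_nat.
    have H1 := cabsD (z + k%:R) (- M%:R); rewrite cabsN cabs_nat in H1.
    have H2 := cabsD z k%:R; rewrite cabs_nat in H2.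
    have : (i <= M)%N by have := ltn_ord i; lia.
    have : (k <= M)%N by lia.
    rewrite -!(ler_nat R) => kM iM; lra.
  have CB : ('C(m, k) * m ^_ k * m ^_ (m - k))%:R <= (m`! * 4 ^ m)%:R :> R.
    by rewrite ler_nat coef_bound.
  rewrite !natrM in CB.
  have -> : (m`! * 4 ^ m)%:R * (4 * A) ^+ m =
      (m`! * 4 ^ m)%:R * ((4 * A) ^+ (m - k) * (4 * A) ^+ k).
    by rewrite -exprD subnK.
  have P0 : 0 <= 4 * A by lra.
  set c1 := cabs (ffc 0 (m - k) z) in F1 *.
  set c2 := cabs (ffc (- M%:R) k (z + k%:R)) in F2 *.
  set a1 := ('C(m, k))%:R in CB *.
  set a2 := (m ^_ k)%:R in CB *.
  set a3 := (m ^_ (m - k))%:R in CB *.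
  have c10 : 0 <= c1 by exact: cabs_ge0.
  have c20 : 0 <= c2 by exact: cabs_ge0.
  have -> : a1 * (a2 * c1 * (a3 * c2)) = (a1 * a2 * a3) * (c1 * c2) by ring.
  apply: ler_pM => //.
  - by rewrite /a1 /a2 /a3 !mulr_ge0 ?ler0n.
  - exact: mulr_ge0.
  - by rewrite natrM.
  - exact: ler_pM.
rewrite sumr_const card_ord exprMn.
have -> : (m`!%:R)^-1 * ((m`! * 4 ^ m)%:R * (4 ^+ m * A ^+ m) *+ m.+1)
    = ((m.+1 * 4 ^ m * 4 ^ m)%:R * A ^+ m :> R).
  rewrite -mulr_natr !natrM natrX; field.
  by rewrite pnatr_eq0 -lt0n fact_gt0.
have AmB : 0 <= A ^+ m by rewrite exprn_ge0.
apply: ler_pM; [by rewrite ler0n | exact: AmB | | exact: HA].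
rewrite ler_nat.
have -> : (2 ^ (6 * m) = 4 ^ m * 4 ^ m * 4 ^ m)%N.
  by rewrite -!expnMn expnM.
have h1 : (m < 2 ^ m)%N by apply: ltn_expl.
have h2 : (2 ^ m <= 4 ^ m)%N by rewrite leq_exp2r.
set x := (4 ^ m)%N in h2 *.
have h3 : (m.+1 <= m ^ 2 * x)%N.
  apply: leq_trans (_ : x <= _)%N; first by lia.
  by rewrite leq_pmull // expn_gt0; lia.
rewrite [(m ^ 2 * _)%N]mulnA [(m ^ 2 * _)%N]mulnA.
by rewrite leq_mul // leq_mul.
Qed.
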